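(* If $T$ is totally positive, then $X^\mathrm{mon}\otimes_{k^\mathrm{mon}}T$ is a tropicalization of $X$ along $v$.
   Context: Let $k$ be an ordered blueprint and $B$ an ordered blue $k$-algebra, i.e. a morphism $k\to B$ of ordered blueprints; let $X=\operatorname{Spec}B$. For an ordered blueprint $C$, its associated monomial blueprint $C^\mathrm{mon}$ has the same underlying monoid as $C$, with partial order (subaddition) generated by the left monomial relations $a\leq\sum b_j$ ($a,b_j$ in the underlying monoid) that hold in $C$; its associated totally positive blueprint $C^\mathrm{pos}$ is $C$ with the additional relation $0\leq 1$ adjoined. An ordered blueprint $T$ is totally positive if $0\leq 1$ holds in $T$. A valuation $v:k\to T$ between ordered blueprints is a multiplicative map (a morphism of underlying monoids) such that the composition $k^\mathrm{mon}\to k\xrightarrow{v}T\to T^\mathrm{pos}$ is a morphism of ordered blueprints. For an ordered blue $T$-algebra $S$, let $\mathrm{Val}_v(B,S)$ be the set of valuations $w:B\to S$ that extend $v$, i.e. such that the square formed by $k\to B$, $v:k\to T$, $w:B\to S$ and $T\to S$ commutes. A tropicalization of $X$ along $v$ is an ordered blue $T$-scheme that represents the functor $S\mapsto\mathrm{Val}_v(B,S)$ on ordered blue $T$-algebras. Here $X^\mathrm{mon}=\operatorname{Spec}B^\mathrm{mon}$, and the tensor product $\otimes_{k^\mathrm{mon}}$ is taken in the category of ordered blueprints (base change along $k^\mathrm{mon}\to T$). *)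

(* Defs.v *)
From Stdlib Require Import List Permutation ClassicalEpsilon.
Import ListNotations.
Set Implicit Arguments.

(* ---------- Raw data of an ordered blueprint: an ordered semiring B^+
   (carrier) with a distinguished multiplicative subset B^• (ob_mono). *)
Record OB := {
  ob_car  : Type;
  ob_zero : ob_car;
  ob_one  : ob_car;
  ob_add  : ob_car -> ob_car -> ob_car;
  ob_mul  : ob_car -> ob_car -> ob_car;
  ob_le   : ob_car -> ob_car -> Prop;
  ob_mono : ob_car -> Prop }.

Definition msort (B : OB) : Type := { x : ob_car B | ob_mono B x }.

Definition sumlist (B : OB) (l : list (ob_car B)) : ob_car B :=
  fold_right (ob_add B) (ob_zero B) l.

Record is_OB (B : OB) : Prop := {
  obH_addA : forall x y z, ob_add B x (ob_add B y z) = ob_add B (ob_add B x y) z;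
  obH_addC : forall x y, ob_add B x y = ob_add B y x;
  obH_add0 : forall x, ob_add B (ob_zero B) x = x;
  obH_mulA : forall x y z, ob_mul B x (ob_mul B y z) = ob_mul B (ob_mul B x y) z;
  obH_mulC : forall x y, ob_mul B x y = ob_mul B y x;
  obH_mul1 : forall x, ob_mul B (ob_one B) x = x;
  obH_mul0 : forall x, ob_mul B (ob_zero B) x = ob_zero B;
  obH_distr : forall x y z,
      ob_mul B x (ob_add B y z) = ob_add B (ob_mul B x y) (ob_mul B x z);
  obH_le_refl : forall x, ob_le B x x;
  obH_le_trans : forall x y z, ob_le B x y -> ob_le B y z -> ob_le B x z;
  obH_le_antisym : forall x y, ob_le B x y -> ob_le B y x -> x = y;
  obH_le_add : forall x y z, ob_le B x y -> ob_le B (ob_add B x z) (ob_add B y z);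
  obH_le_mul : forall x y z, ob_le B x y -> ob_le B (ob_mul B x z) (ob_mul B y z);
  obH_mono0 : ob_mono B (ob_zero B);
  obH_mono1 : ob_mono B (ob_one B);
  obH_monoM : forall x y, ob_mono B x -> ob_mono B y -> ob_mono B (ob_mul B x y);
  obH_gen : forall x, exists l : list (msort B),
      x = sumlist B (map (@proj1_sig _ _) l) }.

Record is_mor (B C : OB) (f : ob_car B -> ob_car C) : Prop := {
  mor_zero : f (ob_zero B) = ob_zero C;
  mor_one  : f (ob_one B) = ob_one C;
  mor_add  : forall x y, f (ob_add B x y) = ob_add C (f x) (f y);
  mor_mul  : forall x y, f (ob_mul B x y) = ob_mul C (f x) (f y);
  mor_le   : forall x y, ob_le B x y -> ob_le C (f x) (f y);
  mor_mono : forall x, ob_mono B x -> ob_mono C (f x) }.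

Definition is_mult (B C : OB) (w : msort B -> msort C) : Prop :=
  (forall H0 : ob_mono B (ob_zero B), proj1_sig (w (exist _ _ H0)) = ob_zero C) /\
  (forall H1 : ob_mono B (ob_one B), proj1_sig (w (exist _ _ H1)) = ob_one C) /\
  (forall x y (Hx : ob_mono B x) (Hy : ob_mono B y) (Hxy : ob_mono B (ob_mul B x y)),
      proj1_sig (w (exist _ _ Hxy)) =
      ob_mul C (proj1_sig (w (exist _ _ Hx))) (proj1_sig (w (exist _ _ Hy)))).

Record Mon := { m_car : Type; m_one : m_car; m_zero : m_car;
                m_mul : m_car -> m_car -> m_car }.

Definition obmon (B : OB) (HB : is_OB B) : Mon := {|
  m_car := msort B;
  m_one := exist _ _ (obH_mono1 HB);
  m_zero := exist _ _ (obH_mono0 HB);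
  m_mul := fun x y => exist _ (ob_mul B (proj1_sig x) (proj1_sig y))
                         (obH_monoM HB _ _ (proj2_sig x) (proj2_sig y)) |}.

(* ---------- Presented ordered blueprint < M | R >: the semiring N[M]
   (finite formal sums = lists up to permutation, 0_M identified with the
   empty sum), modulo the smallest additive and multiplicative preorder
   containing R; B^• = image of M. *)
Definition lmul (M : Mon) (l m : list (m_car M)) : list (m_car M) :=
  flat_map (fun a => map (fun b => m_mul M a b) m) l.

Inductive genle (M : Mon) (R : list (m_car M) -> list (m_car M) -> Prop)
  : list (m_car M) -> list (m_car M) -> Prop :=
| gl_rel : forall l l', R l l' -> genle M R l l'
| gl_zero1 : genle M R [m_zero M] []
| gl_zero2 : genle M R [] [m_zero M]
| gl_perm : forall l l', Permutation l l' -> genle M R l l'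
| gl_trans : forall l l' l'', genle M R l l' -> genle M R l' l'' -> genle M R l l''
| gl_add : forall l l' m, genle M R l l' -> genle M R (l ++ m) (l' ++ m)
| gl_mul : forall l l' m, genle M R l l' -> genle M R (lmul M l m) (lmul M l' m).

Arguments genle {M} R _ _.

Definition gequiv (M : Mon) (R : list (m_car M) -> list (m_car M) -> Prop)
  (l l' : list (m_car M)) : Prop := genle R l l' /\ genle R l' l.

Arguments gequiv {M} R l l'.

Definition qcar (M : Mon) (R : list (m_car M) -> list (m_car M) -> Prop) : Type :=
  { P : list (m_car M) -> Prop | exists l, P = gequiv R l }.

Arguments qcar {M} R.

Definition cls (M : Mon) (R : list (m_car M) -> list (m_car M) -> Prop)
  (l : list (m_car M)) : qcar R :=
  exist _ (gequiv R l) (ex_intro _ l eq_refl).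

Arguments cls {M} R l.

Definition rep (M : Mon) (R : list (m_car M) -> list (m_car M) -> Prop)
  (x : qcar R) : list (m_car M) :=
  proj1_sig (constructive_indefinite_description _ (proj2_sig x)).

Arguments rep {M R} x.

Definition pres (M : Mon) (R : list (m_car M) -> list (m_car M) -> Prop) : OB := {|
  ob_car := qcar R;
  ob_zero := cls R [];
  ob_one := cls R [m_one M];
  ob_add := fun x y => cls R (rep x ++ rep y);
  ob_mul := fun x y => cls R (lmul M (rep x) (rep y));
  ob_le := fun x y => genle R (rep x) (rep y);
  ob_mono := fun x => exists a, x = cls R [a] |}.

Arguments pres {M} R.

Definition pres_map (M N : Mon) (RM : list (m_car M) -> list (m_car M) -> Prop)
  (RN : list (m_car N) -> list (m_car N) -> Prop) (h : m_car M -> m_car N)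
  : ob_car (pres RM) -> ob_car (pres RN) :=
  fun x => cls RN (map h (rep x)).

Arguments pres_map {M N RM RN} h _.

Definition Rmon (B : OB) (HB : is_OB B) (l l' : list (m_car (obmon HB))) : Prop :=
  exists a : msort B, l = [a] /\
    ob_le B (proj1_sig a) (sumlist B (map (@proj1_sig _ _) l')).

Arguments Rmon {B} HB l l'.

Definition Bmon (B : OB) (HB : is_OB B) : OB := pres (Rmon HB).

Definition Rpos (C : OB) (HC : is_OB C) (l l' : list (m_car (obmon HC))) : Prop :=
  ob_le C (sumlist C (map (@proj1_sig _ _) l)) (sumlist C (map (@proj1_sig _ _) l'))
  \/ (l = [] /\ l' = [m_one (obmon HC)]).

Arguments Rpos {C} HC l l'.

Definition Bpos (C : OB) (HC : is_OB C) : OB := pres (Rpos HC).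

Arguments Bmon {B} HB.
Arguments Bpos {C} HC.

Definition totally_positive (T : OB) : Prop := ob_le T (ob_zero T) (ob_one T).

Definition is_valuation (A C : OB) (HA : is_OB A) (HC : is_OB C)
  (v : msort A -> msort C) : Prop :=
  is_mult v /\
  is_mor (Bmon HA) (Bpos HC)
    (@pres_map (obmon HA) (obmon HC) (Rmon HA) (Rpos HC) v).
Arguments is_valuation {A C} HA HC v.

(* ---------- Tensor product (pushout) C (x)_A D, where A = <M|..> is a
   presented blueprint and C, D come with generating monoids MC, MD
   (eC, eD : generators -> C, D) and A -> C, A -> D are given on generators
   by f, g.  Presentation: generators MC x MD, relations: the relations of
   C on (c,1), of D on (1,d), (0,1) = (1,0) = 0, and (c f(a), d) = (c, g(a) d). *)
Definition prodmon (MC MD : Mon) : Mon := {|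
  m_car := (m_car MC * m_car MD)%type;
  m_one := (m_one MC, m_one MD);
  m_zero := (m_zero MC, m_zero MD);
  m_mul := fun x y => (m_mul MC (fst x) (fst y), m_mul MD (snd x) (snd y)) |}.

Section Tens.
Variables (M MC MD : Mon) (C D : OB) (eC : m_car MC -> ob_car C)
  (eD : m_car MD -> ob_car D) (f : m_car M -> m_car MC) (g : m_car M -> m_car MD).

Definition Rtens_eq (l l' : list (m_car (prodmon MC MD))) : Prop :=
  (l = [(m_zero MC, m_one MD)] /\ l' = []) \/
  (l = [(m_one MC, m_zero MD)] /\ l' = []) \/
  (exists a c d, l = [(m_mul MC c (f a), d)] /\ l' = [(c, m_mul MD (g a) d)]).

Definition Rtens (l l' : list (m_car (prodmon MC MD))) : Prop :=
  Rtens_eq l l' \/ Rtens_eq l' l \/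
  (exists lc lc', l = map (fun c => (c, m_one MD)) lc /\
     l' = map (fun c => (c, m_one MD)) lc' /\
     ob_le C (sumlist C (map eC lc)) (sumlist C (map eC lc'))) \/
  (exists ld ld', l = map (fun d => (m_one MC, d)) ld /\
     l' = map (fun d => (m_one MC, d)) ld' /\
     ob_le D (sumlist D (map eD ld)) (sumlist D (map eD ld'))).

Definition tens : OB := pres Rtens.
End Tens.

Section Trop.
Variables (k B T : OB) (Hk : is_OB k) (HB : is_OB B) (HT : is_OB T)
  (phi : ob_car k -> ob_car B) (Hphi : is_mor k B phi)
  (v : msort k -> msort T).

Definition phim (a : msort k) : msort B :=
  exist _ (phi (proj1_sig a)) (mor_mono Hphi _ (proj2_sig a)).

(* X^mon (x)_{k^mon} T (its ordered blueprint of global sections) *)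
Definition tropB : OB :=
  @tens (obmon Hk) (obmon HB) (obmon HT) (Bmon HB) T
    (fun b => @cls (obmon HB) (Rmon HB) [b]) (@proj1_sig _ _) phim v.

Definition tropT (t : ob_car T) : ob_car tropB :=
  @cls (prodmon (obmon HB) (obmon HT)) _ (map (fun ti => (m_one (obmon HB), ti))
     (proj1_sig (constructive_indefinite_description _ (obH_gen HT t)))).

Definition HomT (S : OB) (sigma : ob_car T -> ob_car S) : Type :=
  { h : ob_car tropB -> ob_car S |
      is_mor tropB S h /\ forall t, h (tropT t) = sigma t }.

Definition ValSet (S : OB) (HS : is_OB S) (sigma : ob_car T -> ob_car S) : Type :=
  { w : msort B -> msort S |
      is_valuation HB HS w /\
      forall a : msort k, proj1_sig (w (phim a)) = sigma (proj1_sig (v a)) }.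
End Trop.

Definition bijective (X Y : Type) (F : X -> Y) : Prop :=
  (forall x y, F x = F y -> x = y) /\ (forall y, exists x, F x = y).

(* Main.v *)
Require Import Defs.
From Stdlib Require Import List Permutation ClassicalEpsilon ProofIrrelevance FunctionalExtensionality PropExtensionality.
Import ListNotations.
Set Implicit Arguments.

Lemma msort_eq (B : OB) (x y : msort B) : proj1_sig x = proj1_sig y -> x = y.
Proof. destruct x as [x px], y as [y py]; simpl; intros ->; f_equal; apply proof_irrelevance. Qed.

Section OBth.
Variables (B : OB) (HB : is_OB B).
Notation "x + y" := (ob_add B x y).
Notation "x * y" := (ob_mul B x y).
Notation "0" := (ob_zero B).
Notation "1" := (ob_one B).
Notation "x <= y" := (ob_le B x y).

Lemma addr0 x : x + 0 = x.
Proof. rewrite (obH_addC HB); apply (obH_add0 HB). Qed.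
Lemma mulr1 x : x * 1 = x.
Proof. rewrite (obH_mulC HB); apply (obH_mul1 HB). Qed.
Lemma mulr0 x : x * 0 = 0.
Proof. rewrite (obH_mulC HB); apply (obH_mul0 HB). Qed.
Lemma distr_r x y z : (x + y) * z = x * z + y * z.
Proof. rewrite (obH_mulC HB), (obH_distr HB), !(obH_mulC HB z); reflexivity. Qed.
Lemma le_add_l x y z : x <= y -> z + x <= z + y.
Proof. intro H; rewrite !(obH_addC HB z); apply (obH_le_add HB); auto. Qed.
Lemma le_add2 x y x' y' : x <= y -> x' <= y' -> x + x' <= y + y'.
Proof. intros H H'. apply (obH_le_trans HB) with (y + x'). apply (obH_le_add HB); auto. apply le_add_l; auto. Qed.
Lemma le_mul_l x y z : x <= y -> z * x <= z * y.
Proof. intro H; rewrite !(obH_mulC HB z); apply (obH_le_mul HB); auto. Qed.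
Lemma le_mul2 x y x' y' : x <= y -> x' <= y' -> x * x' <= y * y'.
Proof. intros H H'. apply (obH_le_trans HB) with (y * x'). apply (obH_le_mul HB); auto. apply le_mul_l; auto. Qed.

Lemma sumlist_app l m : sumlist B (l ++ m) = sumlist B l + sumlist B m.
Proof. induction l; simpl. rewrite (obH_add0 HB); auto. rewrite IHl, (obH_addA HB); auto. Qed.

Lemma sumlist_perm l m : Permutation l m -> sumlist B l = sumlist B m.
Proof.
  induction 1; simpl; auto.
  - rewrite IHPermutation; auto.
  - rewrite !(obH_addA HB), (obH_addC HB x y); auto.
  - congruence.
Qed.

Lemma sum_map_mul (A : Type) (G : A -> ob_car B) a m :
  sumlist B (map (fun b => a * G b) m) = a * sumlist B (map G m).
Proof. induction m; simpl. rewrite mulr0; auto. rewrite IHm, (obH_distr HB); auto. Qed.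

Lemma sum_lmul (M : Mon) (G : m_car M -> ob_car B)
  (Gmul : forall a b, G (m_mul M a b) = G a * G b) l m :
  sumlist B (map G (lmul M l m)) = sumlist B (map G l) * sumlist B (map G m).
Proof.
  induction l as [|a l IH]; simpl. rewrite (obH_mul0 HB); auto.
  rewrite map_app, sumlist_app, IH, distr_r, map_map.
  f_equal. rewrite <- sum_map_mul. f_equal. apply map_ext; auto.
Qed.

Lemma sum_nonneg_le (Hpos : 0 <= 1) l : Forall (fun x => 0 <= x) l -> 0 <= sumlist B l.
Proof.
  induction 1; simpl. apply (obH_le_refl HB).
  rewrite <- (obH_add0 HB 0). apply le_add2; auto.
Qed.

Lemma nonneg_all (Hpos : 0 <= 1) x : 0 <= x.
Proof. assert (H := obH_le_mul HB _ _ x Hpos). rewrite (obH_mul0 HB), (obH_mul1 HB) in H. exact H. Qed.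

End OBth.

Lemma genle_sound (M : Mon) (S : OB) (HS : is_OB S) (R : list (m_car M) -> list (m_car M) -> Prop)
  (G : m_car M -> ob_car S)
  (Gmul : forall a b, G (m_mul M a b) = ob_mul S (G a) (G b))
  (Gzero : G (m_zero M) = ob_zero S)
  (Rs : forall l l', R l l' -> ob_le S (sumlist S (map G l)) (sumlist S (map G l'))) :
  forall l l', genle R l l' -> ob_le S (sumlist S (map G l)) (sumlist S (map G l')).
Proof.
  induction 1.
  - auto.
  - simpl. rewrite Gzero, (obH_add0 HS). apply (obH_le_refl HS).
  - simpl. rewrite Gzero, (obH_add0 HS). apply (obH_le_refl HS).
  - rewrite (sumlist_perm HS (Permutation_map G H)). apply (obH_le_refl HS).
  - eapply (obH_le_trans HS); eauto.
  - rewrite !map_app, !(sumlist_app HS). apply (obH_le_add HS); auto.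
  - rewrite !(@sum_lmul S HS M G Gmul). apply (obH_le_mul HS); auto.
Qed.
Lemma sumlist_cons (B : OB) x l : sumlist B (x :: l) = ob_add B x (sumlist B l).
Proof. reflexivity. Qed.
Lemma sumlist_nil (B : OB) : sumlist B [] = ob_zero B.
Proof. reflexivity. Qed.
Lemma le_eq (B : OB) (HB : is_OB B) x y : x = y -> ob_le B x y.
Proof. intros ->; apply (obH_le_refl HB). Qed.
Lemma mul_swap4 (B : OB) (HB : is_OB B) a b c d :
  ob_mul B (ob_mul B a b) (ob_mul B c d) = ob_mul B (ob_mul B a c) (ob_mul B b d).
Proof.
  rewrite !(obH_mulA HB). f_equal. rewrite <- !(obH_mulA HB). f_equal. apply (obH_mulC HB).
Qed.
Lemma sig_eq_pi (A : Type) (P : A -> Prop) (x y : {a | P a}) : proj1_sig x = proj1_sig y -> x = y.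
Proof. destruct x, y; simpl; intros ->; f_equal; apply proof_irrelevance. Qed.

Section Pres.
Variable M : Mon.
Variable R : list (m_car M) -> list (m_car M) -> Prop.
Hypothesis mC : forall a b, m_mul M a b = m_mul M b a.
Hypothesis mA : forall a b c, m_mul M a (m_mul M b c) = m_mul M (m_mul M a b) c.
Hypothesis mone : forall a, m_mul M (m_one M) a = a.

Lemma qcar_eq (x y : qcar R) : proj1_sig x = proj1_sig y -> x = y.
Proof. destruct x as [x px], y as [y py]; simpl; intros ->; f_equal; apply proof_irrelevance. Qed.

Lemma gequiv_refl l : gequiv R l l.
Proof. split; apply gl_perm; apply Permutation_refl. Qed.
Lemma gequiv_sym l l' : gequiv R l l' -> gequiv R l' l.
Proof. intros [? ?]; split; auto. Qed.
Lemma gequiv_trans l l' l'' : gequiv R l l' -> gequiv R l' l'' -> gequiv R l l''.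
Proof. intros [? ?] [? ?]; split; eapply gl_trans; eauto. Qed.

Lemma cls_eq l l' : gequiv R l l' -> cls R l = cls R l'.
Proof.
  intro H. apply qcar_eq; simpl. extensionality m. apply propositional_extensionality.
  split; intro H'. eapply gequiv_trans; [apply gequiv_sym, H|exact H'].
  eapply gequiv_trans; [exact H|exact H'].
Qed.

Lemma cls_inj l l' : cls R l = cls R l' -> gequiv R l l'.
Proof.
  intro H. apply (f_equal (@proj1_sig _ _)) in H. simpl in H.
  rewrite H. apply gequiv_refl.
Qed.

Lemma cls_rep (x : qcar R) : cls R (rep x) = x.
Proof.
  destruct x as [P p]. unfold rep. simpl.
  destruct (constructive_indefinite_description _ p) as [l Hl]. simpl.
  apply qcar_eq. simpl. symmetry; exact Hl.
Qed.

Lemma rep_cls l : gequiv R (rep (cls R l)) l.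
Proof. apply cls_inj. apply cls_rep. Qed.

Lemma cls_surj (x : qcar R) : exists l, x = cls R l.
Proof. exists (rep x). symmetry; apply cls_rep. Qed.

Lemma lmul_nil_r l : lmul M l [] = [].
Proof. induction l; simpl; auto. Qed.

Lemma lmul_app_l l1 l2 m : lmul M (l1 ++ l2) m = lmul M l1 m ++ lmul M l2 m.
Proof. unfold lmul; apply flat_map_app. Qed.

Lemma lmul_cons_r l b m :
  Permutation (lmul M l (b :: m)) (map (fun a => m_mul M a b) l ++ lmul M l m).
Proof.
  induction l as [|a l IH]; simpl; auto.
  apply perm_skip. rewrite IH. apply Permutation_app_swap_app.
Qed.

Lemma lmul_comm l m : Permutation (lmul M l m) (lmul M m l).
Proof.
  revert m; induction l as [|a l IH]; intro m; simpl.
  - rewrite lmul_nil_r; auto.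
  - rewrite lmul_cons_r. rewrite IH. apply Permutation_app_tail.
    erewrite map_ext; [apply Permutation_refl|]. intros; apply mC.
Qed.

Lemma lmul_app_r l m1 m2 : Permutation (lmul M l (m1 ++ m2)) (lmul M l m1 ++ lmul M l m2).
Proof.
  rewrite lmul_comm, lmul_app_l. apply Permutation_app; apply lmul_comm.
Qed.

Lemma lmul_map_l a m n : lmul M (map (m_mul M a) m) n = map (m_mul M a) (lmul M m n).
Proof.
  induction m as [|b m IH]; simpl; auto.
  rewrite IH, map_app, map_map. f_equal. apply map_ext; intros; auto.
Qed.

Lemma lmul_assoc l m n : lmul M (lmul M l m) n = lmul M l (lmul M m n).
Proof.
  induction l as [|a l IH]; simpl; auto.
  rewrite lmul_app_l, IH. f_equal. apply lmul_map_l.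
Qed.

Lemma lmul_one m : lmul M [m_one M] m = m.
Proof. simpl. rewrite app_nil_r. erewrite map_ext; [apply map_id|]. auto. Qed.

Lemma genle_app_l l l' m : genle R l l' -> genle R (m ++ l) (m ++ l').
Proof.
  intro H. eapply gl_trans. apply gl_perm, Permutation_app_comm.
  eapply gl_trans. apply gl_add, H. apply gl_perm, Permutation_app_comm.
Qed.

Lemma genle_app2 a a' b b' : genle R a a' -> genle R b b' -> genle R (a ++ b) (a' ++ b').
Proof. intros. eapply gl_trans. apply gl_add; eauto. apply genle_app_l; auto. Qed.

Lemma genle_mul_l l l' m : genle R l l' -> genle R (lmul M m l) (lmul M m l').
Proof.
  intro H. eapply gl_trans. apply gl_perm, lmul_comm.
  eapply gl_trans. apply gl_mul, H. apply gl_perm, lmul_comm.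
Qed.

Lemma genle_mul2 a a' b b' : genle R a a' -> genle R b b' -> genle R (lmul M a b) (lmul M a' b').
Proof. intros. eapply gl_trans. apply gl_mul; eauto. apply genle_mul_l; auto. Qed.

Lemma gequiv_app a a' b b' : gequiv R a a' -> gequiv R b b' -> gequiv R (a ++ b) (a' ++ b').
Proof. intros [? ?] [? ?]; split; apply genle_app2; auto. Qed.
Lemma gequiv_mul a a' b b' : gequiv R a a' -> gequiv R b b' -> gequiv R (lmul M a b) (lmul M a' b').
Proof. intros [? ?] [? ?]; split; apply genle_mul2; auto. Qed.

Lemma pres_add l m : ob_add (pres R) (cls R l) (cls R m) = cls R (l ++ m).
Proof. simpl. apply cls_eq, gequiv_app; apply rep_cls. Qed.
Lemma pres_mul l m : ob_mul (pres R) (cls R l) (cls R m) = cls R (lmul M l m).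
Proof. simpl. apply cls_eq, gequiv_mul; apply rep_cls. Qed.
Lemma pres_le l m : ob_le (pres R) (cls R l) (cls R m) <-> genle R l m.
Proof.
  simpl. destruct (rep_cls l) as [A1 A2], (rep_cls m) as [B1 B2].
  split; intro H. eapply gl_trans; [exact A2|]. eapply gl_trans; [exact H|exact B1].
  eapply gl_trans; [exact A1|]. eapply gl_trans; [exact H|exact B2].
Qed.
Lemma pres_zero : ob_zero (pres R) = cls R [].
Proof. reflexivity. Qed.
Lemma pres_one : ob_one (pres R) = cls R [m_one M].
Proof. reflexivity. Qed.

Lemma pres_sum l : sumlist (pres R) (map (fun a => cls R [a]) l) = cls R l.
Proof.
  induction l as [|a l IH]; [reflexivity|]. rewrite map_cons, sumlist_cons, IH, pres_add; auto.
Qed.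

Lemma pres_sum_gen (S : OB) (HS : is_OB S) (h : ob_car (pres R) -> ob_car S)
  (hz : h (cls R []) = ob_zero S)
  (ha : forall x y, h (ob_add (pres R) x y) = ob_add S (h x) (h y)) l :
  h (cls R l) = sumlist S (map (fun a => h (cls R [a])) l).
Proof.
  induction l as [|a l IH]; [exact hz|]. rewrite map_cons, sumlist_cons.
  rewrite <- IH, <- ha, pres_add; auto.
Qed.

Lemma pres_is_OB : is_OB (pres R).
Proof.
  constructor.
  - intros x y z. destruct (cls_surj x) as [a ->], (cls_surj y) as [b ->], (cls_surj z) as [c ->].
    rewrite !pres_add, app_assoc; auto.
  - intros x y. destruct (cls_surj x) as [a ->], (cls_surj y) as [b ->].
    rewrite !pres_add. apply cls_eq. split; apply gl_perm, Permutation_app_comm.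
  - intros x. destruct (cls_surj x) as [a ->]. rewrite pres_zero, pres_add; auto.
  - intros x y z. destruct (cls_surj x) as [a ->], (cls_surj y) as [b ->], (cls_surj z) as [c ->].
    rewrite !pres_mul, lmul_assoc; auto.
  - intros x y. destruct (cls_surj x) as [a ->], (cls_surj y) as [b ->].
    rewrite !pres_mul. apply cls_eq. split; apply gl_perm, lmul_comm.
  - intros x. destruct (cls_surj x) as [a ->]. rewrite pres_one, pres_mul, lmul_one; auto.
  - intros x. destruct (cls_surj x) as [a ->]. rewrite pres_zero, pres_mul; auto.
  - intros x y z. destruct (cls_surj x) as [a ->], (cls_surj y) as [b ->], (cls_surj z) as [c ->].
    rewrite !pres_add, !pres_mul, pres_add. apply cls_eq. split; apply gl_perm.
    apply lmul_app_r. symmetry; apply lmul_app_r.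
  - intros x. destruct (cls_surj x) as [a ->]. apply pres_le. apply gl_perm; auto.
  - intros x y z. destruct (cls_surj x) as [a ->], (cls_surj y) as [b ->], (cls_surj z) as [c ->].
    rewrite !pres_le. apply gl_trans.
  - intros x y. destruct (cls_surj x) as [a ->], (cls_surj y) as [b ->].
    rewrite !pres_le. intros; apply cls_eq; split; auto.
  - intros x y z. destruct (cls_surj x) as [a ->], (cls_surj y) as [b ->], (cls_surj z) as [c ->].
    rewrite !pres_add, !pres_le. apply gl_add.
  - intros x y z. destruct (cls_surj x) as [a ->], (cls_surj y) as [b ->], (cls_surj z) as [c ->].
    rewrite !pres_mul, !pres_le. apply gl_mul.
  - exists (m_zero M). apply cls_eq. split; [apply gl_zero2|apply gl_zero1].
  - exists (m_one M). reflexivity.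
  - intros x y [a ->] [b ->]. exists (m_mul M a b). rewrite pres_mul. reflexivity.
  - intros x. destruct (cls_surj x) as [a ->].
    exists (map (fun c => exist (fun x => ob_mono (pres R) x) (cls R [c]) (ex_intro _ c eq_refl)) a).
    rewrite map_map. simpl. symmetry. apply pres_sum.
Qed.

End Pres.

Section Mons.
Variables (B : OB) (HB : is_OB B).
Lemma obmon_C a b : m_mul (obmon HB) a b = m_mul (obmon HB) b a.
Proof. apply msort_eq; simpl; apply (obH_mulC HB). Qed.
Lemma obmon_A a b c : m_mul (obmon HB) a (m_mul (obmon HB) b c) = m_mul (obmon HB) (m_mul (obmon HB) a b) c.
Proof. apply msort_eq; simpl; apply (obH_mulA HB). Qed.
Lemma obmon_1 a : m_mul (obmon HB) (m_one (obmon HB)) a = a.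
Proof. apply msort_eq; simpl; apply (obH_mul1 HB). Qed.

Lemma Bmon_OB : is_OB (Bmon HB).
Proof. apply pres_is_OB; [apply obmon_C|apply obmon_A|apply obmon_1]. Qed.
Lemma Bpos_OB : is_OB (Bpos HB).
Proof. apply pres_is_OB; [apply obmon_C|apply obmon_A|apply obmon_1]. Qed.
End Mons.

Lemma prod_C (M N : Mon) (HM : forall a b, m_mul M a b = m_mul M b a)
  (HN : forall a b, m_mul N a b = m_mul N b a) a b :
  m_mul (prodmon M N) a b = m_mul (prodmon M N) b a.
Proof. destruct a, b; simpl; f_equal; auto. Qed.
Lemma prod_A (M N : Mon) (HM : forall a b c, m_mul M a (m_mul M b c) = m_mul M (m_mul M a b) c)
  (HN : forall a b c, m_mul N a (m_mul N b c) = m_mul N (m_mul N a b) c) a b c :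
  m_mul (prodmon M N) a (m_mul (prodmon M N) b c) = m_mul (prodmon M N) (m_mul (prodmon M N) a b) c.
Proof. destruct a, b, c; simpl; f_equal; auto. Qed.
Lemma prod_1 (M N : Mon) (HM : forall a, m_mul M (m_one M) a = a)
  (HN : forall a, m_mul N (m_one N) a = a) a :
  m_mul (prodmon M N) (m_one (prodmon M N)) a = a.
Proof. destruct a; simpl; f_equal; auto. Qed.

Section Val.
Variables (B S : OB) (HB : is_OB B) (HS : is_OB S) (w : msort B -> msort S).
Definition G (b : msort B) : ob_car S := proj1_sig (w b).
Hypothesis wmul : forall a b, G (m_mul (obmon HB) a b) = ob_mul S (G a) (G b).
Hypothesis w0 : G (m_zero (obmon HB)) = ob_zero S.
Hypothesis w1 : G (m_one (obmon HB)) = ob_one S.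
Hypothesis wmon : forall a l', ob_le B (proj1_sig a) (sumlist B (map (@proj1_sig _ _) l')) ->
   ob_le S (G a) (sumlist S (map G l')).

Lemma Wsound l l' : genle (Rmon HB) l l' -> ob_le S (sumlist S (map G l)) (sumlist S (map G l')).
Proof.
  apply genle_sound; auto.
  intros l0 l0' [a [-> H]]. simpl. rewrite (addr0 HS). auto.
Qed.

Lemma mapG l : map (@proj1_sig _ _) (map w l) = map G l.
Proof. rewrite map_map; reflexivity. Qed.

Lemma pos_cls_eq (L L' : list (msort S)) :
  sumlist S (map (@proj1_sig _ _) L) = sumlist S (map (@proj1_sig _ _) L') ->
  cls (Rpos HS) L = cls (Rpos HS) L'.
Proof.
  intro E. apply cls_eq. split; apply gl_rel; left; rewrite E; apply (obH_le_refl HS).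
Qed.

Lemma pmap_cls l : @pres_map (obmon HB) (obmon HS) (Rmon HB) (Rpos HS) w (cls (Rmon HB) l)
   = cls (Rpos HS) (map w l).
Proof.
  unfold pres_map. destruct (rep_cls _ (Rmon HB) l) as [H1 H2].
  apply cls_eq. split; apply gl_rel; left; rewrite !mapG; apply Wsound; auto.
Qed.

Lemma valuation_of : is_valuation HB HS w.
Proof.
  split.
  - split; [|split].
    + intros H0. assert (E : exist _ (ob_zero B) H0 = m_zero (obmon HB)) by (apply msort_eq; reflexivity).
      rewrite E. apply w0.
    + intros H1. assert (E : exist _ (ob_one B) H1 = m_one (obmon HB)) by (apply msort_eq; reflexivity).
      rewrite E. apply w1.
    + intros x y Hx Hy Hxy.
      assert (E : exist _ _ Hxy = m_mul (obmon HB) (exist _ x Hx) (exist _ y Hy)) by (apply msort_eq; reflexivity).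
      rewrite E. apply wmul.
  - constructor.
    + unfold Bmon, Bpos. rewrite pres_zero, pmap_cls. reflexivity.
    + unfold Bmon, Bpos. rewrite pres_one, pmap_cls, pres_one. apply pos_cls_eq.
      simpl. unfold G in w1. simpl in w1. rewrite w1. reflexivity.
    + unfold Bmon, Bpos. intros x y.
      destruct (cls_surj x) as [a ->], (cls_surj y) as [b ->].
      rewrite pres_add, !pmap_cls, map_app.
      rewrite pres_add. reflexivity.
    + unfold Bmon, Bpos. intros x y.
      destruct (cls_surj x) as [a ->], (cls_surj y) as [b ->].
      rewrite pres_mul, !pmap_cls by apply obmon_C.
      rewrite pres_mul by apply obmon_C. apply pos_cls_eq.
      rewrite mapG, (@sum_lmul S HS (obmon HB) G wmul).
      rewrite (@sum_lmul S HS (obmon HS) (@proj1_sig _ _)) by reflexivity.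
      rewrite !mapG. reflexivity.
    + unfold Bmon, Bpos. intros x y.
      destruct (cls_surj x) as [a ->], (cls_surj y) as [b ->].
      rewrite !pmap_cls, !pres_le. intro H. apply gl_rel. left. rewrite !mapG. apply Wsound; auto.
    + unfold Bmon, Bpos. intros x [a ->]. rewrite pmap_cls. exists (w a). reflexivity.
Qed.
End Val.

Lemma Forall_perm (A : Type) (P : A -> Prop) l l' : Permutation l l' -> Forall P l -> Forall P l'.
Proof.
  intros Hp H. rewrite Forall_forall in *. intros x Hx. apply H.
  eapply Permutation_in; [symmetry; exact Hp|exact Hx].
Qed.

Section DL.
Variables (B : OB) (HB : is_OB B).
Notation E := (msort B).
Definition le0 (c : E) : Prop := ob_le B (proj1_sig c) (ob_zero B).
Definition D (y : ob_car B) (l : list E) : Prop :=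
  (Forall le0 l /\ ob_le B (ob_zero B) y) \/
  (exists l1 c l2, l = l1 ++ c :: l2 /\ ob_le B (proj1_sig c) y /\ Forall le0 l1 /\ Forall le0 l2).
Definition mapm (b : E) (l : list E) : list E := map (fun a => m_mul (obmon HB) a b) l.
Definition sumE (l : list E) : ob_car B := sumlist B (map (@proj1_sig _ _) l).

Lemma all0_D0 l : Forall le0 l -> D (ob_zero B) l.
Proof. intro H; left; split; auto. apply (obH_le_refl HB). Qed.

Lemma D0_all0 l : D (ob_zero B) l -> Forall le0 l.
Proof.
  intros [[H _]|[l1 [c [l2 [-> [Hc [H1 H2]]]]]]]; auto.
  apply Forall_app; split; auto.
Qed.

Lemma D_split y L1 L2 : D y (L1 ++ L2) -> (D y L1 /\ Forall le0 L2) \/ (Forall le0 L1 /\ D y L2).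
Proof.
  intros [[H Hy]|[l1 [c [l2 [E1 [Hc [H1 H2]]]]]]].
  - apply Forall_app in H as [H1 H2]. left; split; auto. left; auto.
  - destruct (app_eq_app _ _ _ _ E1) as [l' [[-> E2]|[-> E2]]].
    + destruct l' as [|d l'].
      * simpl in E2. subst L2. right. rewrite app_nil_r. split; auto.
        right. exists [], c, l2. repeat split; auto.
      * simpl in E2. injection E2 as -> ->. apply Forall_app in H2 as [H2a H2b].
        left. split; auto. right. exists l1, d, l'. repeat split; auto.
    + subst L2. apply Forall_app in H1 as [H1a H1b]. right. split; auto.
      right. exists l', c, l2. repeat split; auto.
Qed.

Lemma D_join y L1 L2 : (D y L1 /\ Forall le0 L2) \/ (Forall le0 L1 /\ D y L2) -> D y (L1 ++ L2).
Proof.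
  intros [[[[H Hy]|[l1 [c [l2 [-> [Hc [H1 H2]]]]]]] H3]|[H3 [[H Hy]|[l1 [c [l2 [-> [Hc [H1 H2]]]]]]]]].
  - left; split; auto. apply Forall_app; auto.
  - right. exists l1, c, (l2 ++ L2). rewrite <- app_assoc. repeat split; auto. apply Forall_app; auto.
  - left; split; auto. apply Forall_app; auto.
  - right. exists (L1 ++ l1), c, l2. rewrite <- app_assoc. repeat split; auto. apply Forall_app; auto.
Qed.

Lemma D_perm y L L' : Permutation L L' -> D y L -> D y L'.
Proof.
  intros Hp [[H Hy]|[l1 [c [l2 [-> [Hc [H1 H2]]]]]]].
  - left; split; auto. eapply Forall_perm; eauto.
  - assert (Hin : In c L'). { eapply Permutation_in; [exact Hp|]. apply in_elt. }
    destruct (in_split _ _ Hin) as [l1' [l2' ->]].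
    apply Permutation_app_inv in Hp.
    assert (Hf : Forall le0 (l1' ++ l2')). { eapply Forall_perm; [exact Hp|]. apply Forall_app; auto. }
    apply Forall_app in Hf as [Ha Hb]. right. exists l1', c, l2'. repeat split; auto.
Qed.

Lemma sum_le0 l : Forall le0 l -> ob_le B (sumE l) (ob_zero B).
Proof.
  induction 1; unfold sumE in *; simpl. apply (obH_le_refl HB).
  eapply (obH_le_trans HB). apply (le_add2 HB); [exact H|exact IHForall].
  rewrite (obH_add0 HB); apply (obH_le_refl HB).
Qed.

Lemma sumE_app l m : sumE (l ++ m) = ob_add B (sumE l) (sumE m).
Proof. unfold sumE. rewrite map_app. apply (sumlist_app HB). Qed.

Lemma D_sum y l : D y l -> ob_le B (sumE l) y.
Proof.
  intros [[H Hy]|[l1 [c [l2 [-> [Hc [H1 H2]]]]]]].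
  - eapply (obH_le_trans HB); [apply sum_le0|]; auto.
  - rewrite sumE_app. unfold sumE at 2. simpl. fold (sumE l2).
    eapply (obH_le_trans HB); [|exact Hc].
    eapply (obH_le_trans HB). apply (le_add2 HB). apply sum_le0; eauto. apply (le_add_l HB). apply sum_le0; eauto.
    rewrite (obH_add0 HB), (addr0 HB). apply (obH_le_refl HB).
Qed.

Lemma sum_mapm b l : sumE (mapm b l) = ob_mul B (sumE l) (proj1_sig b).
Proof.
  induction l as [|a l IH]; unfold sumE in *; simpl. rewrite (obH_mul0 HB); auto.
  rewrite IH, (distr_r HB); auto.
Qed.

Lemma mapm_one l : mapm (m_one (obmon HB)) l = l.
Proof.
  unfold mapm. erewrite map_ext; [apply map_id|]. intro a. rewrite obmon_C. apply obmon_1.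
Qed.

Lemma mapm_app b l m : mapm b (l ++ m) = mapm b l ++ mapm b m.
Proof. apply map_app. Qed.

Lemma lmul_cons (M : Mon) a l m : lmul M (a :: l) m = map (m_mul M a) m ++ lmul M l m.
Proof. reflexivity. Qed.

Lemma mapm_lmul b l m :
  Permutation (mapm b (lmul (obmon HB) l m)) (flat_map (fun c => mapm (m_mul (obmon HB) c b) l) m).
Proof.
  assert (E1 : mapm b (lmul (obmon HB) l m) = lmul (obmon HB) l (mapm b m)).
  { induction l as [|a l IH]; [reflexivity|]. rewrite !lmul_cons. unfold mapm in *. rewrite map_app, IH, !map_map. f_equal.
    apply map_ext. intro c. symmetry; apply obmon_A. }
  rewrite E1. rewrite (@lmul_comm (obmon HB) (@obmon_C B HB)).
  unfold lmul, mapm. rewrite flat_map_concat_map, map_map, <- flat_map_concat_map.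
  apply Permutation_refl'. apply flat_map_ext. intro c. apply map_ext. intro a. apply obmon_C.
Qed.

Definition Inv (l l' : list E) : Prop := forall y b, D y (mapm b l') -> D y (mapm b l).

Lemma genle_Inv l l' : genle (Rmon HB) l l' -> Inv l l'.
Proof.
  induction 1; intros y b HD.
  - destruct H as [a [-> Ha]]. right. exists [], (m_mul (obmon HB) a b), []. repeat split; auto.
    simpl. eapply (obH_le_trans HB); [|apply D_sum; exact HD].
    rewrite sum_mapm. apply (obH_le_mul HB). exact Ha.
  - destruct HD as [[_ Hy]|[l1 [c [l2 [E1 _]]]]].
    + right. exists [], (m_mul (obmon HB) (m_zero (obmon HB)) b), []. repeat split; auto.
      simpl. rewrite (obH_mul0 HB). auto.
    + destruct l1; discriminate.
  - left. split; auto. apply D_sum in HD. unfold sumE in HD. simpl in HD.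
    rewrite (addr0 HB), (obH_mul0 HB) in HD. auto.
  - eapply D_perm; [|exact HD]. apply Permutation_map. symmetry; auto.
  - auto.
  - rewrite mapm_app in *. apply D_split in HD as [[H1 H2]|[H1 H2]]; apply D_join.
    + left; split; auto.
    + right; split; auto. apply D0_all0. apply IHgenle. apply all0_D0; auto.
  - eapply D_perm; [symmetry; apply mapm_lmul|].
    eapply D_perm in HD; [|apply mapm_lmul].
    revert y HD. induction m as [|c m IHm]; intros y HD; simpl in *; auto.
    apply D_split in HD as [[H1 H2]|[H1 H2]]; apply D_join.
    + left; split; auto. apply D0_all0, IHm, all0_D0; auto.
    + right; split; auto. apply D0_all0, IHgenle, all0_D0; auto.
Qed.

Lemma genle_D l x : genle (Rmon HB) l [x] -> D (proj1_sig x) l.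
Proof.
  intro H. rewrite <- (mapm_one l). apply (genle_Inv H).
  right. exists [], (m_mul (obmon HB) x (m_one (obmon HB))), []. repeat split; auto.
  simpl. rewrite (mulr1 HB). apply (obH_le_refl HB).
Qed.

End DL.

Lemma sum_le_c (B : OB) (HB : is_OB B) l1 c l2 :
  Forall (le0 (B:=B)) l1 -> Forall (le0 (B:=B)) l2 -> ob_le B (sumE (l1 ++ c :: l2)) (proj1_sig c).
Proof.
  intros H1 H2. rewrite (sumE_app HB). unfold sumE at 2. simpl. fold (sumE l2).
  eapply (obH_le_trans HB). apply (le_add2 HB). apply (sum_le0 HB); eauto. apply (le_add_l HB). apply (sum_le0 HB); eauto.
  rewrite (obH_add0 HB), (addr0 HB). apply (obH_le_refl HB).
Qed.

Lemma Rmon_sound (B : OB) (HB : is_OB B) l l' : genle (Rmon HB) l l' -> ob_le B (sumE l) (sumE l').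
Proof.
  unfold sumE. apply (@genle_sound (obmon HB) B HB (Rmon HB) (@proj1_sig _ _)); auto.
  intros l0 l0' [a [-> Ha]]. simpl. rewrite (addr0 HB). auto.
Qed.

Section Weird.
Variables (B S : OB) (HB : is_OB B) (HS : is_OB S) (Spos : ob_le S (ob_zero S) (ob_one S))
  (w : msort B -> msort S) (Hval : is_valuation HB HS w).

Definition sigS (q : qcar (Rpos HS)) : ob_car S := sumlist S (map (@proj1_sig _ _) (rep q)).

Lemma Rpos_sound L L' : genle (Rpos HS) L L' ->
  ob_le S (sumlist S (map (@proj1_sig _ _) L)) (sumlist S (map (@proj1_sig _ _) L')).
Proof.
  apply (@genle_sound (obmon HS) S HS (Rpos HS) (@proj1_sig _ _)); auto.
  intros l0 l0' [H|[-> ->]]; auto. simpl. rewrite (addr0 HS). auto.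
Qed.

Lemma sigS_cls L : sigS (cls (Rpos HS) L) = sumlist S (map (@proj1_sig _ _) L).
Proof.
  unfold sigS. destruct (rep_cls _ (Rpos HS) L) as [H1 H2].
  apply (obH_le_antisym HS); apply Rpos_sound; auto.
Qed.

Lemma sigS_add x y : sigS (ob_add (Bpos HS) x y) = ob_add S (sigS x) (sigS y).
Proof.
  destruct (cls_surj x) as [a ->], (cls_surj y) as [b ->]. unfold Bpos.
  rewrite pres_add, !sigS_cls, map_app. apply (sumlist_app HS).
Qed.

Lemma sigS_le x y : ob_le (Bpos HS) x y -> ob_le S (sigS x) (sigS y).
Proof.
  destruct (cls_surj x) as [a ->], (cls_surj y) as [b ->]. unfold Bpos.
  rewrite pres_le, !sigS_cls. apply Rpos_sound.
Qed.

Definition P := @pres_map (obmon HB) (obmon HS) (Rmon HB) (Rpos HS) w.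
Lemma Pmor : is_mor (Bmon HB) (Bpos HS) P.
Proof. apply Hval. Qed.

Definition Wv (z : ob_car (Bmon HB)) : ob_car S := sigS (P z).
Definition W (x : msort B) : ob_car S := Wv (cls (Rmon HB) [x]).

Lemma Wv_sum l : Wv (cls (Rmon HB) l) = sumlist S (map W l).
Proof.
  apply (@pres_sum_gen (obmon HB) (Rmon HB) S HS Wv).
  - unfold Wv. change (cls (Rmon HB) []) with (ob_zero (Bmon HB)). rewrite (mor_zero Pmor).
    change (ob_zero (Bpos HS)) with (cls (Rpos HS) []). rewrite sigS_cls. reflexivity.
  - intros x y. unfold Wv. change (ob_add (pres (Rmon HB)) x y) with (ob_add (Bmon HB) x y).
    rewrite (mor_add Pmor). apply sigS_add.
Qed.

Lemma W_mon a l' : ob_le B (proj1_sig a) (sumE l') -> ob_le S (W a) (sumlist S (map W l')).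
Proof.
  intro H. rewrite <- Wv_sum. unfold W, Wv. apply sigS_le. apply (mor_le Pmor).
  unfold Bmon. apply pres_le. apply gl_rel. exists a; split; auto.
Qed.

Lemma W_eq x : W x = sumlist S (map (fun b => proj1_sig (w b)) (rep (cls (Rmon HB) [x]))).
Proof. unfold W, Wv, P, pres_map. rewrite sigS_cls, map_map. reflexivity. Qed.

Lemma W_eq' x L : rep (cls (Rmon HB) [x]) = L ->
  W x = sumlist S (map (fun b => proj1_sig (w b)) L).
Proof. intro E. rewrite W_eq. f_equal. f_equal. exact E. Qed.

Definition Gw (b : msort B) : ob_car S := proj1_sig (w b).

Lemma w0 : Gw (m_zero (obmon HB)) = ob_zero S.
Proof. destruct Hval as [[H0 _] _]. apply H0. Qed.
Lemma w1 : Gw (m_one (obmon HB)) = ob_one S.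
Proof. destruct Hval as [[_ [H1 _]] _]. apply H1. Qed.
Lemma wmul a b : Gw (m_mul (obmon HB) a b) = ob_mul S (Gw a) (Gw b).
Proof. destruct Hval as [[_ [_ H]] _]. destruct a as [a pa], b as [b pb]. apply H. Qed.

Lemma zero_eq (x : msort B) : proj1_sig x = ob_zero B -> Gw x = ob_zero S.
Proof. intro E. rewrite <- w0. f_equal. apply msort_eq. exact E. Qed.

Lemma sumG_le0 l : (forall e, In e l -> Gw e = ob_zero S) -> sumlist S (map Gw l) = ob_zero S.
Proof.
  induction l as [|a l IH]; intros H; simpl; auto.
  rewrite H by (left; auto). rewrite IH by (intros; apply H; right; auto). apply (obH_add0 HS).
Qed.

Lemma le_mid a x y : ob_le S a (ob_add S x (ob_add S a y)).
Proof.
  eapply (obH_le_trans HS); [|apply (le_add2 HS); [apply (nonneg_all HS Spos)|apply (le_add_l HS); apply (nonneg_all HS Spos)]].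
  rewrite (obH_add0 HS), (addr0 HS). apply (obH_le_refl HS).
Qed.

Lemma structure x : exists l1 l2, rep (cls (Rmon HB) [x]) = l1 ++ x :: l2 /\
    Forall (le0 (B:=B)) l1 /\ Forall (le0 (B:=B)) l2 \/
   (proj1_sig x = ob_zero B /\ Forall (le0 (B:=B)) (rep (cls (Rmon HB) [x]))).
Proof.
  destruct (rep_cls _ (Rmon HB) [x]) as [H1 H2].
  apply Rmon_sound in H2. unfold sumE at 1 in H2. simpl in H2. rewrite (addr0 HB) in H2.
  apply genle_D in H1.
  destruct H1 as [[Hf Hy]|[l1 [c [l2 [E [Hc [Ha Hb]]]]]]].
  - exists [], []. right. split; auto. apply (obH_le_antisym HB); auto.
    eapply (obH_le_trans HB); [exact H2|]. apply (sum_le0 HB); auto.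
  - assert (Ec : c = x).
    { apply msort_eq. apply (obH_le_antisym HB); auto.
      eapply (obH_le_trans HB); [exact H2|]. pose proof (sum_le_c HB c Ha Hb) as Hs.
      rewrite <- E in Hs. exact Hs. }
    subst c. exists l1, l2. left. split; [exact E|auto].
Qed.

Lemma W_le0 e : le0 e -> W e = ob_zero S.
Proof.
  intro He. apply (obH_le_antisym HS); [|apply (nonneg_all HS Spos)].
  assert (H := @W_mon e [] He). simpl in H. exact H.
Qed.

Lemma Gw_le0 e : le0 e -> Gw e = ob_zero S.
Proof.
  intro He. destruct (structure e) as [l1 [l2 [[E [Ha Hb]]|[E _]]]].
  - apply (obH_le_antisym HS); [|apply (nonneg_all HS Spos)].
    rewrite <- (W_le0 e He), (W_eq' _ E), map_app. simpl. rewrite (sumlist_app HS), sumlist_cons. apply le_mid.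
  - apply zero_eq; auto.
Qed.

Lemma W_G x : W x = Gw x.
Proof.
  assert (Z : forall l, Forall (le0 (B:=B)) l -> sumlist S (map Gw l) = ob_zero S).
  { intros l Hl. apply sumG_le0. intros e He. apply Gw_le0. rewrite Forall_forall in Hl; auto. }
  destruct (structure x) as [l1 [l2 [[E [Ha Hb]]|[E Hf]]]].
  - rewrite (W_eq' _ E), map_app. simpl. fold (map Gw l1). fold (map Gw l2).
    rewrite (sumlist_app HS), sumlist_cons, !Z, (obH_add0 HS), (addr0 HS); auto.
  - rewrite W_eq. fold (map Gw (rep (cls (Rmon HB) [x]))). rewrite Z; auto. symmetry; apply zero_eq; auto.
Qed.

Lemma wmon a l' : ob_le B (proj1_sig a) (sumlist B (map (@proj1_sig _ _) l')) ->
   ob_le S (Gw a) (sumlist S (map Gw l')).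
Proof.
  intro H. assert (H' := W_mon a l' H). rewrite W_G in H'.
  erewrite map_ext in H'; [exact H'|]. apply W_G.
Qed.

End Weird.

Section Trop2.
Variables (k B T : OB) (Hk : is_OB k) (HB : is_OB B) (HT : is_OB T)
  (phi : ob_car k -> ob_car B) (Hphi : is_mor k B phi)
  (v : msort k -> msort T).

Definition M0 := prodmon (obmon HB) (obmon HT).
Definition eC0 (b : m_car (obmon HB)) : ob_car (Bmon HB) := @cls (obmon HB) (Rmon HB) [b].
Definition R0 := @Rtens (obmon Hk) (obmon HB) (obmon HT) (Bmon HB) T eC0 (@proj1_sig _ _) (phim Hphi) v.

Lemma M0_C : forall a b, m_mul M0 a b = m_mul M0 b a.
Proof. apply prod_C; apply obmon_C. Qed.
Lemma M0_A : forall a b c, m_mul M0 a (m_mul M0 b c) = m_mul M0 (m_mul M0 a b) c.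
Proof. apply prod_A; apply obmon_A. Qed.
Lemma M0_1 : forall a, m_mul M0 (m_one M0) a = a.
Proof. apply prod_1; apply obmon_1. Qed.

Lemma tropB_eq : tropB Hk HB HT Hphi v = pres R0.
Proof. reflexivity. Qed.

Lemma tropB_OB : is_OB (tropB Hk HB HT Hphi v).
Proof. apply pres_is_OB; [apply M0_C|apply M0_A|apply M0_1]. Qed.

Definition f1 (t : msort T) : m_car M0 := (m_one (obmon HB), t).
Definition fb (b : msort B) : m_car M0 := (b, m_one (obmon HT)).

Lemma tropT_cls (l : list (msort T)) (t : ob_car T) : sumlist T (map (@proj1_sig _ _) l) = t ->
  tropT Hk HB HT Hphi v t = cls R0 (map f1 l).
Proof.
  intro E. unfold tropT. destruct (constructive_indefinite_description _ _) as [l0 E0]. simpl.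
  apply cls_eq. split; apply gl_rel; right; right; right.
  - exists l0, l. repeat split. apply (le_eq HT). exact (eq_trans (eq_sym E0) (eq_sym E)).
  - exists l, l0. repeat split. apply (le_eq HT). exact (eq_trans E E0).
Qed.

Lemma map_f1_lmul lx ly :
  lmul M0 (map f1 lx) (map f1 ly) = map f1 (lmul (obmon HT) lx ly).
Proof.
  induction lx as [|a lx IH]; [reflexivity|]. simpl map. rewrite !lmul_cons, map_app. f_equal; [|exact IH]. rewrite !map_map.
  apply map_ext. intro b. unfold f1. simpl. f_equal. apply msort_eq; simpl; apply (obH_mul1 HB).
Qed.

Lemma tropT_mor : is_mor T (tropB Hk HB HT Hphi v) (tropT Hk HB HT Hphi v).
Proof.
  change (is_mor T (pres R0) (tropT Hk HB HT Hphi v)).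
  constructor.
  - rewrite (tropT_cls ([])); reflexivity.
  - rewrite (tropT_cls ([m_one (obmon HT)])). reflexivity. simpl. apply (addr0 HT).
  - intros x y. destruct (obH_gen HT x) as [lx Ex], (obH_gen HT y) as [ly Ey].
    rewrite (tropT_cls (lx ++ ly)) by (rewrite map_app, (sumlist_app HT); f_equal; [exact (eq_sym Ex)|exact (eq_sym Ey)]).
    rewrite (tropT_cls lx) by exact (eq_sym Ex). rewrite (tropT_cls ly) by exact (eq_sym Ey).
    rewrite pres_add, map_app; auto.
  - intros x y. destruct (obH_gen HT x) as [lx Ex], (obH_gen HT y) as [ly Ey].
    rewrite (tropT_cls (lmul (obmon HT) lx ly)) by (rewrite (@sum_lmul T HT (obmon HT) (@proj1_sig _ _)) by reflexivity; f_equal; [exact (eq_sym Ex)|exact (eq_sym Ey)]).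
    rewrite (tropT_cls lx) by exact (eq_sym Ex). rewrite (tropT_cls ly) by exact (eq_sym Ey).
    rewrite pres_mul by apply M0_C. rewrite map_f1_lmul; auto.
  - intros x y H. destruct (obH_gen HT x) as [lx Ex], (obH_gen HT y) as [ly Ey].
    rewrite (tropT_cls lx) by exact (eq_sym Ex). rewrite (tropT_cls ly) by exact (eq_sym Ey).
    apply pres_le. apply gl_rel. right; right; right.
    exists lx, ly. repeat split. rewrite Ex, Ey in H. exact H.
  - intros t Ht. exists (f1 (exist _ t Ht)).
    rewrite (tropT_cls ([exist _ t Ht])). reflexivity. simpl. apply (addr0 HT).
Qed.

Section Fwd.
Variables (S : OB) (HS : is_OB S) (sigma : ob_car T -> ob_car S).

Definition hh (h : HomT Hk HB HT Hphi v S sigma) := proj1_sig h.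

Lemma hh_mor h : is_mor (pres R0) S (hh h).
Proof. exact (proj1 (proj2_sig h)). Qed.

Definition wof (h : HomT Hk HB HT Hphi v S sigma) (b : msort B) : msort S :=
  exist (ob_mono S) (hh h (cls R0 [fb b]))
    (mor_mono (hh_mor h) _ (ex_intro _ (fb b) eq_refl)).

Lemma hh_sum h l : hh h (cls R0 l) = sumlist S (map (fun a => hh h (cls R0 [a])) l).
Proof.
  apply (pres_sum_gen HS). apply (mor_zero (hh_mor h)). apply (mor_add (hh_mor h)).
Qed.

Lemma lmul_pair (b : msort B) (t : msort T) : lmul M0 [fb b] [f1 t] = [(b, t)].
Proof.
  simpl. f_equal. unfold fb, f1. simpl. f_equal; apply msort_eq; simpl.
  apply (mulr1 HB). apply (obH_mul1 HT).
Qed.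

Lemma lmul_fb (a b : msort B) : lmul M0 [fb a] [fb b] = [fb (m_mul (obmon HB) a b)].
Proof.
  simpl. f_equal. unfold fb. simpl. f_equal. apply msort_eq; simpl. apply (obH_mul1 HT).
Qed.

Lemma hh_pair h (b : msort B) (t : msort T) :
  hh h (cls R0 [(b, t)]) = ob_mul S (hh h (cls R0 [fb b])) (sigma (proj1_sig t)).
Proof.
  transitivity (hh h (ob_mul (pres R0) (cls R0 [fb b]) (cls R0 (map f1 [t])))).
  { rewrite pres_mul by apply M0_C. simpl map. rewrite lmul_pair. reflexivity. }
  rewrite (mor_mul (hh_mor h)). f_equal. rewrite <- (proj2 (proj2_sig h) (proj1_sig t)).
  rewrite (tropT_cls [t]) by (simpl; apply (addr0 HT)). reflexivity.
Qed.

Lemma wof_ok h : is_valuation HB HS (wof h) /\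
   (forall a, proj1_sig (wof h (phim Hphi a)) = sigma (proj1_sig (v a))).
Proof.
  assert (Hm := hh_mor h). split.
  - apply valuation_of.
    + intros a b. unfold G, wof; simpl. rewrite <- (mor_mul Hm), pres_mul by apply M0_C.
      rewrite lmul_fb. reflexivity.
    + unfold G, wof; simpl. rewrite <- (mor_zero Hm). f_equal. apply cls_eq.
      split; apply gl_rel; [left|right;left]; left; split; reflexivity.
    + unfold G, wof; simpl. rewrite <- (mor_one Hm). reflexivity.
    + intros a l' Hl. unfold G, wof; simpl.
      assert (E : sumlist S (map (fun b => hh h (cls R0 [fb b])) l') = hh h (cls R0 (map fb l'))).
      { rewrite hh_sum, map_map. reflexivity. }
      apply (obH_le_trans HS) with (hh h (cls R0 (map fb l'))); [| apply (le_eq HS); exact (eq_sym E)].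
      apply (mor_le Hm). apply pres_le. apply gl_rel. right; right; left.
      exists [a], l'. repeat split.
      unfold eC0, Bmon. rewrite !pres_sum. apply pres_le. apply gl_rel. exists a. split; auto.
  - intro a. unfold wof; simpl.
    rewrite <- (proj2 (proj2_sig h) (proj1_sig (v a))).
    rewrite (tropT_cls ([v a])) by (simpl; apply (addr0 HT)).
    unfold hh. f_equal. apply cls_eq. simpl map. unfold fb, f1.
    replace (phim Hphi a, m_one (obmon HT)) with (m_mul (obmon HB) (m_one (obmon HB)) (phim Hphi a), m_one (obmon HT)) by (rewrite obmon_1; auto).
    replace (m_one (obmon HB), v a) with (m_one (obmon HB), m_mul (obmon HT) (v a) (m_one (obmon HT))) by (rewrite obmon_C, obmon_1; auto).
    split; apply gl_rel; [left|right;left]; right; right; exists a, (m_one (obmon HB)), (m_one (obmon HT)); split; reflexivity.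
Qed.

Definition PhiF (h : HomT Hk HB HT Hphi v S sigma) : ValSet HB Hphi v HS sigma :=
  exist _ (wof h) (wof_ok h).

End Fwd.

Section Bij.
Variables (S : OB) (HS : is_OB S) (sigma : ob_car T -> ob_car S) (Hsig : is_mor T S sigma).

Lemma hh_ext (h1 h2 : HomT Hk HB HT Hphi v S sigma) :
  (forall b, hh h1 (cls R0 [fb b]) = hh h2 (cls R0 [fb b])) -> h1 = h2.
Proof.
  intro H.
  assert (E : forall x, hh h1 x = hh h2 x).
  { intro x. destruct (cls_surj x) as [l ->]. rewrite !hh_sum. f_equal. apply map_ext.
    intros [b t]. rewrite !hh_pair, H; auto. all: exact HS. }
  apply sig_eq_pi. extensionality x. apply E.
Qed.

Lemma Phi_inj (h1 h2 : HomT Hk HB HT Hphi v S sigma) : PhiF HS h1 = PhiF HS h2 -> h1 = h2.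
Proof.
  intro H. apply hh_ext. intro b. apply (f_equal (@proj1_sig _ _)) in H. simpl in H.
  apply (f_equal (fun w => proj1_sig (w b))) in H. exact H.
Qed.

Hypothesis Tpos : totally_positive T.

Lemma Spos : ob_le S (ob_zero S) (ob_one S).
Proof. rewrite <- (mor_zero Hsig), <- (mor_one Hsig). apply (mor_le Hsig). exact Tpos. Qed.

Section Surj.
Variables (w : msort B -> msort S) (Hval : is_valuation HB HS w)
  (Hcomp : forall a : msort k, proj1_sig (w (phim Hphi a)) = sigma (proj1_sig (v a))).

Definition Gp (p : m_car M0) : ob_car S := ob_mul S (proj1_sig (w (fst p))) (sigma (proj1_sig (snd p))).
Definition Fp (l : list (m_car M0)) : ob_car S := sumlist S (map Gp l).

Lemma Gp_mul p q : Gp (m_mul M0 p q) = ob_mul S (Gp p) (Gp q).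
Proof.
  destruct p as [a s], q as [b t].
  change (Gp (m_mul M0 (a, s) (b, t))) with
    (ob_mul S (proj1_sig (w (m_mul (obmon HB) a b))) (sigma (ob_mul T (proj1_sig s) (proj1_sig t)))).
  pose proof (wmul Hval a b) as Wm. unfold Gw in Wm. rewrite Wm, (mor_mul Hsig).
  unfold Gp; simpl. apply (mul_swap4 HS).
Qed.

Lemma Gp_zero : Gp (m_zero M0) = ob_zero S.
Proof.
  change (Gp (m_zero M0)) with (ob_mul S (proj1_sig (w (m_zero (obmon HB)))) (sigma (proj1_sig (m_zero (obmon HT))))).
  pose proof (w0 Hval) as W0. unfold Gw in W0. rewrite W0. apply (obH_mul0 HS).
Qed.

Lemma G1 : proj1_sig (w (m_one (obmon HB))) = ob_one S.
Proof. pose proof (w1 Hval) as W1. unfold Gw in W1. exact W1. Qed.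

Lemma Fp_fb lc : Fp (map (fun c => (c, m_one (obmon HT))) lc) = sumlist S (map (G w) lc).
Proof.
  induction lc as [|c lc IH]; [reflexivity|]. unfold Fp in *. cbn [map]. rewrite !sumlist_cons, IH.
  f_equal. unfold Gp; simpl. rewrite (mor_one Hsig), (mulr1 HS). reflexivity.
Qed.

Lemma Fp_f1 ld : Fp (map (fun d => (m_one (obmon HB), d)) ld) = sigma (sumlist T (map (@proj1_sig _ _) ld)).
Proof.
  induction ld as [|d ld IH]. symmetry; apply (mor_zero Hsig).
  unfold Fp in *. cbn [map]. rewrite !sumlist_cons, IH, (mor_add Hsig).
  f_equal. unfold Gp; cbn [fst snd]. rewrite G1, (obH_mul1 HS). reflexivity.
Qed.

Lemma teq l l' : @Rtens_eq (obmon Hk) (obmon HB) (obmon HT) (phim Hphi) v l l' -> Fp l = Fp l'.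
Proof.
  pose proof (w0 Hval) as W0. unfold Gw in W0.
  intros [[-> ->]|[[-> ->]|[a [c [d [-> ->]]]]]]; unfold Fp; cbn [map]; rewrite ?sumlist_cons.
  - unfold Gp; cbn [fst snd]. rewrite W0, (obH_mul0 HS), (obH_add0 HS). reflexivity.
  - unfold Gp; cbn [fst snd]. rewrite G1.
    change (proj1_sig (m_zero (obmon HT))) with (ob_zero T).
    rewrite (mor_zero Hsig), (mulr0 HS), (obH_add0 HS). reflexivity.
  - f_equal. unfold Gp; cbn [fst snd].
    pose proof (wmul Hval c (phim Hphi a)) as Wm. unfold Gw in Wm. rewrite Wm, Hcomp.
    change (proj1_sig (m_mul (obmon HT) (v a) d)) with (ob_mul T (proj1_sig (v a)) (proj1_sig d)).
    rewrite (mor_mul Hsig). symmetry. apply (obH_mulA HS).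
Qed.

Lemma wmon' : forall a l', ob_le B (proj1_sig a) (sumlist B (map (@proj1_sig _ _) l')) ->
   ob_le S (G w a) (sumlist S (map (G w) l')).
Proof. exact (wmon Spos Hval). Qed.

Lemma Rs l l' : R0 l l' -> ob_le S (Fp l) (Fp l').
Proof.
  intros [H|[H|[[lc [lc' [-> [-> H]]]]|[ld [ld' [-> [-> H]]]]]]].
  - apply (le_eq HS). apply teq; auto.
  - apply (le_eq HS). symmetry. apply teq; auto.
  - rewrite !Fp_fb. apply (Wsound HS w (wmul Hval) (w0 Hval) wmon').
    unfold eC0, Bmon in H. rewrite !pres_sum, pres_le in H. exact H.
  - rewrite !Fp_f1. apply (mor_le Hsig). exact H.
Qed.

Lemma Fsound l l' : genle R0 l l' -> ob_le S (Fp l) (Fp l').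
Proof. apply (genle_sound HS Gp Gp_mul Gp_zero Rs). Qed.

Definition hh0 (x : ob_car (pres R0)) : ob_car S := Fp (rep x).

Lemma hh0_cls l : hh0 (cls R0 l) = Fp l.
Proof.
  unfold hh0. destruct (rep_cls _ R0 l) as [H1 H2].
  apply (obH_le_antisym HS); apply Fsound; auto.
Qed.

Lemma hh0_mor : is_mor (tropB Hk HB HT Hphi v) S hh0.
Proof.
  change (is_mor (pres R0) S hh0). constructor.
  - rewrite pres_zero, hh0_cls. reflexivity.
  - rewrite pres_one, hh0_cls. unfold Fp. cbn [map]. rewrite sumlist_cons, sumlist_nil, (addr0 HS).
    unfold Gp. change (ob_mul S (proj1_sig (w (m_one (obmon HB)))) (sigma (ob_one T)) = ob_one S). rewrite G1.
    rewrite (mor_one Hsig), (mulr1 HS). reflexivity.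
  - intros x y. destruct (cls_surj x) as [a ->], (cls_surj y) as [b ->].
    rewrite pres_add, !hh0_cls. unfold Fp. rewrite map_app. apply (sumlist_app HS).
  - intros x y. destruct (cls_surj x) as [a ->], (cls_surj y) as [b ->].
    rewrite pres_mul by apply M0_C. rewrite !hh0_cls. unfold Fp. apply (sum_lmul HS). apply Gp_mul.
  - intros x y. destruct (cls_surj x) as [a ->], (cls_surj y) as [b ->].
    rewrite pres_le, !hh0_cls. apply Fsound.
  - intros x [a ->]. rewrite hh0_cls. unfold Fp. cbn [map]. rewrite sumlist_cons, sumlist_nil, (addr0 HS).
    unfold Gp. apply (obH_monoM HS). apply (proj2_sig (w (fst a))). apply (mor_mono Hsig). apply proj2_sig.
Qed.

Lemma hh0_comp t : hh0 (tropT Hk HB HT Hphi v t) = sigma t.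
Proof.
  destruct (obH_gen HT t) as [l El].
  rewrite (tropT_cls l) by exact (eq_sym El). rewrite hh0_cls.
  unfold f1. rewrite Fp_f1. f_equal. exact (eq_sym El).
Qed.

Definition hsurj : HomT Hk HB HT Hphi v S sigma :=
  exist _ hh0 (conj hh0_mor hh0_comp).

Lemma hsurj_ok : PhiF HS hsurj = exist _ w (conj Hval Hcomp).
Proof.
  apply sig_eq_pi. simpl. extensionality b. apply msort_eq. simpl.
  unfold hh. simpl. rewrite hh0_cls. unfold Fp, fb. cbn [map]. rewrite sumlist_cons, sumlist_nil, (addr0 HS).
  unfold Gp. cbn [fst snd]. change (proj1_sig (m_one (obmon HT))) with (ob_one T).
  rewrite (mor_one Hsig), (mulr1 HS). reflexivity.
Qed.

End Surj.
Lemma Phi_surj (y : ValSet HB Hphi v HS sigma) : exists h, PhiF HS h = y.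
Proof.
  destruct y as [w [Hval Hcomp]]. exists (hsurj Hval Hcomp). apply hsurj_ok.
Qed.

End Bij.
End Trop2.

Theorem theoremA (k B T : OB) (Hk : is_OB k) (HB : is_OB B) (HT : is_OB T)
  (phi : ob_car k -> ob_car B) (Hphi : is_mor k B phi)
  (v : msort k -> msort T) (Hv : is_valuation Hk HT v)
  (Tpos : totally_positive T) :
  is_OB (tropB Hk HB HT Hphi v) /\
  is_mor T (tropB Hk HB HT Hphi v) (tropT Hk HB HT Hphi v) /\
  exists Phi : forall (S : OB) (HS : is_OB S) (sigma : ob_car T -> ob_car S),
      is_mor T S sigma ->
      HomT Hk HB HT Hphi v S sigma -> ValSet HB Hphi v HS sigma,
    (forall S HS sigma Hsigma, bijective (Phi S HS sigma Hsigma)) /\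
    (forall S HS sigma Hsigma S' HS' sigma' Hsigma'
            (u : ob_car S -> ob_car S'),
        is_mor S S' u -> (forall t, u (sigma t) = sigma' t) ->
        forall (h : HomT Hk HB HT Hphi v S sigma)
               (h' : HomT Hk HB HT Hphi v S' sigma'),
          (forall x, proj1_sig h' x = u (proj1_sig h x)) ->
          forall b : msort B,
            proj1_sig (proj1_sig (Phi S' HS' sigma' Hsigma' h') b) =
            u (proj1_sig (proj1_sig (Phi S HS sigma Hsigma h) b))).
Proof.
  split; [apply tropB_OB|]. split; [apply tropT_mor|].
  exists (fun S HS sigma _ h => PhiF HS h). split.
  - intros S HS sigma Hsigma. split.
    + intros h1 h2. apply Phi_inj.
    + intro y. apply (Phi_surj Hk HT Hsigma Tpos y).
  - intros S HS sigma Hsigma S' HS' sigma' Hsigma' u Hu Hc h h' Hh b. simpl. apply Hh.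
Qed.
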